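(* Let $n\geq 6$ be an integer. Then $\Delta_D(S_n)^*$ is connected if and only if neither $n$ nor $n-1$ is a prime.
   Context: $S_n$ is the symmetric group. The deep commuting graph $\Delta_D(G)$ has vertex set $G$, distinct vertices adjacent iff their preimages commute in a Schur cover $\tilde G$ of $G$ (a central extension $\{e\}\to M(G)\to\tilde G\to G\to\{e\}$ with kernel contained in $Z(\tilde G)\cap[\tilde G,\tilde G]$, of maximal order; $M(G)$ the Schur multiplier). A vertex is dominant if adjacent to every other vertex; the reduced graph $\Gamma^*$ is the subgraph induced by the non-dominant vertices. *)

(* Defs.v *)
From mathcomp Require Import all_boot all_fingroup all_solvable.
Set Implicit Arguments. Unset Strict Implicit. Unset Printing Implicit Defensive.
Local Open Scope group_scope.

Definition stem_extension (gT hT : finGroupType) (G : {group gT})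
    (H : {group hT}) (f : {morphism H >-> gT}) : Prop :=
  f @* H = G /\ 'ker f \subset 'Z(H) :&: H^`(1).

Definition schur_cover (gT hT : finGroupType) (G : {group gT})
    (H : {group hT}) (f : {morphism H >-> gT}) : Prop :=
  stem_extension G f /\
  forall (kT : finGroupType) (K : {group kT}) (g : {morphism K >-> gT}),
    stem_extension G g -> #|'ker g| <= #|'ker f|.

(* Deep commuting graph w.r.t. the cover (H, f): distinct x y of G are
   adjacent iff some (equivalently any) preimages commute in H. *)
Definition deep_adj (gT hT : finGroupType) (H : {group hT})
    (f : {morphism H >-> gT}) (x y : gT) : bool :=
  (x != y) &&
  [exists x' : hT, exists y' : hT,
     [&& x' \in H, y' \in H, f x' == x, f y' == y & x' * y' == y' * x']].

Definition deep_dominant (gT hT : finGroupType) (G : {group gT})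
    (H : {group hT}) (f : {morphism H >-> gT}) (x : gT) : bool :=
  (x \in G) && [forall y in G, (y != x) ==> deep_adj f x y].

Definition reduced_edge (gT hT : finGroupType) (G : {group gT})
    (H : {group hT}) (f : {morphism H >-> gT}) : rel gT :=
  fun x y =>
    [&& x \in G, ~~ deep_dominant G f x, y \in G, ~~ deep_dominant G f y
      & deep_adj f x y].

Definition reduced_deep_connected (gT hT : finGroupType) (G : {group gT})
    (H : {group hT}) (f : {morphism H >-> gT}) : Prop :=
  forall x y, x \in G -> ~~ deep_dominant G f x ->
              y \in G -> ~~ deep_dominant G f y ->
              connect (reduced_edge G f) x y.

(* Main.v *)
Require Import Defs.
From mathcomp Require Import all_boot all_fingroup all_solvable.
From mathcomp Require Import zify.
Set Implicit Arguments. Unset Strict Implicit. Unset Printing Implicit Defensive.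
Local Open Scope group_scope.

Lemma fresh_pt n (s : seq 'I_n) : size s < n -> exists e : 'I_n, e \notin s.
Proof.
move=> hs; apply/existsP; rewrite -negb_forall; apply/negP => /forallP hall.
have: #|'I_n| <= #|s|.
  by apply: subset_leq_card; apply/subsetP => x _; exact: hall.
by rewrite card_ord => /leq_trans/(_ (card_size s)); rewrite leqNgt hs.
Qed.

Lemma commute_of_conj (gT : finGroupType) (x y : gT) : x ^ y = x -> commute x y.
Proof. by move=> h; rewrite /commute conjgC h. Qed.

Definition c3 n (a b c : 'I_n) : {perm 'I_n} := tperm a b * tperm a c.

Lemma c3_conj n (a b c : 'I_n) g : (c3 a b c) ^ g = c3 (g a) (g b) (g c).
Proof. by rewrite /c3 conjMg !tpermJ. Qed.

Lemma c3_fix n (a b c d : 'I_n) : d \notin [:: a; b; c] -> c3 a b c d = d.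
Proof.
rewrite !inE !negb_or => /and3P[da db dc].
by rewrite /c3 permM !tpermD // eq_sym.
Qed.

Lemma c3_a n (a b c : 'I_n) : a != b -> a != c -> b != c -> c3 a b c a = b.
Proof. by move=> ab ac bc; rewrite /c3 permM tpermL tpermD // eq_sym. Qed.
Lemma c3_b n (a b c : 'I_n) : a != b -> a != c -> b != c -> c3 a b c b = c.
Proof. by move=> ab ac bc; rewrite /c3 permM tpermR tpermL. Qed.
Lemma c3_c n (a b c : 'I_n) : a != b -> a != c -> b != c -> c3 a b c c = a.
Proof. by move=> ab ac bc; rewrite /c3 permM (tpermD ac bc) tpermR. Qed.

Lemma c3_ne1 n (a b c : 'I_n) : a != b -> a != c -> b != c -> c3 a b c != 1.
Proof.
move=> ab ac bc; apply/eqP => h; have := c3_a ab ac bc.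
by rewrite h perm1 => ba; move: ab; rewrite ba eqxx.
Qed.

Lemma c3_cube n (a b c : 'I_n) : a != b -> a != c -> b != c -> (c3 a b c) ^+ 3 = 1.
Proof.
move=> ab ac bc; apply/permP => x; set s := c3 a b c.
rewrite perm1 !expgS expg0 mulg1 2!permM /s.
have [->|xa] := eqVneq x a; first by rewrite c3_a ?c3_b ?c3_c.
have [->|xb] := eqVneq x b; first by rewrite c3_b ?c3_c ?c3_a.
have [->|xc] := eqVneq x c; first by rewrite c3_c ?c3_a ?c3_b.
have hx : x \notin [:: a; b; c] by rewrite !inE negb_or xa negb_or xb xc.
by rewrite !c3_fix.
Qed.

Lemma porbit_card n (y : {perm 'I_n}) a :
  prime #[y] -> y a != a -> #|porbit y a| = #[y] /\ #|'C_<[y]>[a | 'P]| = 1%N.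
Proof.
move=> hp ya; have hc := card_orbit_stab 'P <[y]> a; rewrite -porbitE in hc.
have hd : #|porbit y a| %| #[y] by rewrite /order -hc dvdn_mulr.
have h1 : #|porbit y a| != 1%N.
  apply/negP => /eqP/(@eq_leq _ 1) /card_le1_eqP h.
  have := h (y a) a; rewrite -{1}(expg1 y) mem_porbit porbit_id => /(_ isT isT) e.
  by move: ya; rewrite -e eqxx.
have e := (elimT (prime_nt_dvdP hp h1) hd).
split => //; move: hc; rewrite e /order => hc.
have hp0 : 0 < #|<[y]>| by rewrite cardG_gt0.
by apply/eqP; rewrite -(eqn_pmul2l hp0) muln1 hc.
Qed.

Lemma stab_triv n (y : {perm 'I_n}) a g :
  prime #[y] -> y a != a -> g \in <[y]> -> g a = a -> g = 1.
Proof.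
move=> hp ya hg ga; have [_ hs] := porbit_card hp ya.
have hg' : g \in 'C_<[y]>[a | 'P] by rewrite inE hg; apply/astab1P.
have := card_le1_trivg (eq_leq hs).
by move=> e; move: hg'; rewrite e inE => /eqP.
Qed.

Lemma cyc_uniq n (y : {perm 'I_n}) a g h :
  prime #[y] -> y a != a -> g \in <[y]> -> h \in <[y]> -> g a = h a -> g = h.
Proof.
move=> hp ya hg hh e.
have := @stab_triv n y a (g * h^-1) hp ya (groupM hg (groupVr hh)).
rewrite permM e permK => /(_ erefl) /eqP; rewrite mulg_eq1 => /eqP ->.
by rewrite invgK.
Qed.

Lemma porbit_cyc n (y : {perm 'I_n}) a g : g \in <[y]> -> g a \in porbit y a.
Proof. by case/cycleP=> i ->; exact: mem_porbit. Qed.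

Lemma porbit_cycP n (y : {perm 'I_n}) a u :
  u \in porbit y a -> exists2 g, g \in <[y]> & g a = u.
Proof. by case/porbitP=> i ->; exists (y ^+ i); rewrite ?mem_cycle. Qed.

Lemma porbit_moveg n (y : {perm 'I_n}) a g u :
  g \in <[y]> -> (g u \in porbit y a) = (u \in porbit y a).
Proof. by case/cycleP=> i ->; rewrite porbit_sym porbit_perm porbit_sym. Qed.

Lemma porbit_move n (y : {perm 'I_n}) a u :
  (y u \in porbit y a) = (u \in porbit y a).
Proof. by rewrite porbit_moveg // cycle_id. Qed.

Lemma porbit_disj n (y : {perm 'I_n}) a b u :
  u \in porbit y a -> u \in porbit y b -> b \in porbit y a.
Proof.
move=> ha hb; rewrite -eq_porbit_mem.
by rewrite -eq_porbit_mem in ha; rewrite -eq_porbit_mem in hb; rewrite -(eqP hb) (eqP ha).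
Qed.

Definition gpick n (y : {perm 'I_n}) a u : {perm 'I_n} :=
  odflt 1 [pick g in <[y]> | g a == u].

Lemma gpickP n (y : {perm 'I_n}) a u :
  u \in porbit y a -> gpick y a u \in <[y]> /\ gpick y a u a = u.
Proof.
move=> hu; rewrite /gpick; case: pickP => [g /andP[hg /eqP e] | none] //=.
have [g hg e] := porbit_cycP hu; have := none g.
by rewrite hg e eqxx.
Qed.

Section Swap.
Lemma swap_aux n (y : {perm 'I_n}) a b u :
  prime #[y] -> y a != a -> y b != b -> b \notin porbit y a -> u \in porbit y a ->
  let g := gpick y a u in
  [/\ g b \in porbit y b, g b \notin porbit y a & gpick y b (g b) = g].
Proof.
move=> hp ya yb ba hu g; have [hg ga] := gpickP hu.
have gb : g b \in porbit y b by exact: porbit_cyc.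
split => //.
  by apply: contra ba => h; apply: porbit_disj h gb.
have [hh hb] := gpickP gb.
exact: (cyc_uniq hp yb hh hg hb).
Qed.
End Swap.

Definition zfun n (y : {perm 'I_n}) a b u :=
  if u \in porbit y a then gpick y a u b
  else if u \in porbit y b then gpick y b u a else u.

Lemma zfunK n (y : {perm 'I_n}) a b :
  prime #[y] -> y a != a -> y b != b -> b \notin porbit y a ->
  involutive (zfun y a b).
Proof.
move=> hp ya yb ba.
have ab : a \notin porbit y b by rewrite porbit_sym.
move=> u; have [ha|ha] := boolP (u \in porbit y a).
  have [h1 h2 h3] := swap_aux hp ya yb ba ha.
  rewrite {2}/zfun ha /zfun (negbTE h2) h1 h3; exact: (gpickP ha).2.
have [hb|hb] := boolP (u \in porbit y b); last by rewrite /zfun (negbTE ha) (negbTE hb) (negbTE ha) (negbTE hb).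
have [h1 h2 h3] := swap_aux hp yb ya ab hb.
rewrite {2}/zfun (negbTE ha) hb /zfun.
by rewrite h1 h3; exact: (gpickP hb).2.
Qed.

Lemma zfun_comm n (y : {perm 'I_n}) a b u :
  prime #[y] -> y a != a -> y b != b -> b \notin porbit y a ->
  zfun y a b (y u) = y (zfun y a b u).
Proof.
move=> hp ya yb ba; rewrite /zfun !porbit_move.
have key : forall c d, y c != c -> u \in porbit y c ->
    gpick y c (y u) d = y (gpick y c u d).
  move=> c d yc hu; have [hg gc] := gpickP hu.
  have hyu : y u \in porbit y c by rewrite porbit_move.
  have [hg' gc'] := gpickP hyu.
  have -> : gpick y c (y u) = gpick y c u * y.
    by apply: (cyc_uniq hp yc hg' (groupM hg (cycle_id y))); rewrite gc' permM gc.
  by rewrite permM.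
case: ifP => ha; first exact: key.
case: ifP => hb //; exact: key.
Qed.

Lemma swap_perm n (y : {perm 'I_n}) a b :
  prime #[y] -> y a != a -> y b != b -> b \notin porbit y a ->
  exists z : {perm 'I_n}, [/\ z != 1, #[z] %| 2 & commute y z].
Proof.
move=> hp ya yb ba.
have inj := can_inj (zfunK hp ya yb ba).
exists (perm inj); split.
- apply/eqP => /permP/(_ a); rewrite permE perm1 /zfun porbit_id.
  have [hg _] := gpickP (porbit_id y a).
  have e1 : gpick y a a = 1.
    by apply: (cyc_uniq hp ya hg (group1 _)); rewrite perm1; exact: (gpickP (porbit_id y a)).2.
  rewrite e1 perm1 => e.
  by move: ba; rewrite e porbit_id.
- rewrite order_dvdn; apply/eqP/permP => u.
  by rewrite expgS expg1 permM !permE zfunK // perm1.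
- apply/permP => u; rewrite !permM !permE zfun_comm //.
Qed.

Lemma moved n (x : {perm 'I_n}) : x != 1 -> exists a, x a != a.
Proof.
move=> x1; apply/existsP; rewrite -negb_forall; apply: contra x1 => /forallP h.
by apply/eqP/permP => a; rewrite perm1; apply/eqP.
Qed.

Lemma cyc_comm n (v g h : {perm 'I_n}) : g \in <[v]> -> h \in <[v]> -> commute g h.
Proof. by case/cycleP=> i -> /cycleP[j ->]; apply: commuteX2. Qed.

Lemma cent_prime n (v w : {perm 'I_n}) :
  prime #[v] -> n <= #[v] + 1 -> commute v w -> w \in <[v]>.
Proof.
move=> hp hn cvw.
have v1 : v != 1 by rewrite -order_gt1 prime_gt1.
have [a va] := moved v1.
have [hO _] := porbit_card hp va.
have cw : forall h, h \in <[v]> -> commute w h.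
  by move=> h /cycleP[i ->]; apply: commuteX; apply: commute_sym.
have hwa : w a \in porbit v a.
  apply/negPn/negP => hna.
  have vwa : v (w a) != w a.
    rewrite -permM -cvw permM; apply: contra va => /eqP /perm_inj ->; done.
  have [hO' _] := porbit_card hp vwa.
  have dis : porbit v a :&: porbit v (w a) = set0.
    apply/setP => u; rewrite !inE; apply/negP => /andP[h1 h2].
    by move: hna; rewrite porbit_sym (porbit_disj h2 h1).
  have := cardsUI (porbit v a) (porbit v (w a)); rewrite dis cards0 addn0 hO hO'.
  have := max_card (porbit v a :|: porbit v (w a)); rewrite card_ord => hm he.
  have := prime_gt1 hp; lia.
have [g hg ga] := porbit_cycP hwa.
have case1 : forall u, u \in porbit v a -> w u = g u.
  move=> u /porbit_cycP[h hh <-].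
  have e1 : w (h a) = h (w a) by rewrite -!permM (cw h hh).
  have e2 : g (h a) = h (g a) by rewrite -!permM (cyc_comm hg hh).
  by rewrite e1 e2 ga.
have hC : #|~: porbit v a| <= 1.
  have := cardsC (porbit v a); rewrite card_ord hO; lia.
have -> : w = g; last done.
apply/permP => u; have [hu|hu] := boolP (u \in porbit v a); first exact: case1.
have gu : g u \in ~: porbit v a by rewrite inE porbit_moveg.
have wu : w u \in ~: porbit v a.
  rewrite inE; apply/negP => /porbit_cycP[h hh eh].
  have hu' : (h * g^-1) a \in porbit v a by apply: porbit_cyc; rewrite groupM ?groupV.
  have e : (h * g^-1) a = u.
    by apply: (@perm_inj _ w); rewrite case1 // permM permKV eh.
  by move: hu; rewrite -e hu'.
have uC : u \in ~: porbit v a by rewrite inE.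
move/card_le1_eqP: hC => hC; have e1 := hC _ _ wu uC; have e2 := hC _ _ gu uC.
by rewrite -e1 -e2.
Qed.

Lemma adj_comm n hT (H : {group hT}) (f : {morphism H >-> {perm 'I_n}}) x y :
  deep_adj f x y -> commute x y.
Proof.
case/andP=> _ /existsP[x' /existsP[y' /and5P[hx hy /eqP fx /eqP fy /eqP c]]].
by rewrite /commute -fx -fy -!morphM // c.
Qed.

Lemma preim n hT (H : {group hT}) (f : {morphism H >-> {perm 'I_n}}) x :
  f @* H = [set: {perm 'I_n}] -> exists2 x', x' \in H & f x' = x.
Proof.
move=> surj; have : x \in f @* H by rewrite surj inE.
by case/morphimP=> x' hx' _ ->; exists x'.
Qed.

Lemma dom1 n hT (H : {group hT}) (f : {morphism H >-> {perm 'I_n}}) :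
  f @* H = [set: {perm 'I_n}] -> deep_dominant [set: {perm 'I_n}]%G f 1.
Proof.
move=> surj; rewrite /deep_dominant inE /=; apply/forallP => y; apply/implyP => _.
apply/implyP => y1; rewrite /deep_adj eq_sym y1 /=.
have [y' hy' fy] := preim y surj.
apply/existsP; exists 1; apply/existsP; exists y'.
by rewrite group1 hy' morph1 fy !eqxx mul1g mulg1 eqxx.
Qed.

Lemma noncentral n (x : {perm 'I_n}) : 2 < n -> x != 1 -> exists y, ~~ (x * y == y * x).
Proof.
move=> n2 x1.
have [a xa] : exists a, x a != a.
  apply/existsP; rewrite -negb_forall; apply: contra x1 => /forallP h.
  by apply/eqP/permP => a; rewrite perm1; apply/eqP.
have [c hc] := @fresh_pt n [:: a; x a] n2.
move: hc; rewrite !inE negb_or => /andP[ca cxa].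
exists (tperm a c); apply/negP => /eqP/permP/(_ c).
rewrite !permM tpermR => h.
have : tperm a c (x c) = tperm a c (x a).
  by rewrite h tpermD // eq_sym.
move/perm_inj/perm_inj => /eqP; rewrite (negbTE ca) //.
Qed.

Lemma nondom n hT (H : {group hT}) (f : {morphism H >-> {perm 'I_n}}) x :
  2 < n -> x != 1 -> ~~ deep_dominant [set: {perm 'I_n}]%G f x.
Proof.
move=> n2 x1; have [y hy] := noncentral n2 x1.
rewrite /deep_dominant negb_and negb_forall; apply/orP; right.
apply/existsP; exists y; rewrite inE /= negb_imply; apply/andP; split.
  by apply: contra hy => /eqP ->.
by apply/negP => /adj_comm c; move: hy; rewrite c eqxx.
Qed.


Lemma adj_sym n hT (H : {group hT}) (f : {morphism H >-> {perm 'I_n}}) x y :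
  deep_adj f x y = deep_adj f y x.
Proof.
apply/idP/idP => /andP[ne /existsP[x' /existsP[y' /and5P[hx hy fx fy c]]]];
  (apply/andP; split; first by rewrite eq_sym);
  apply/existsP; exists y'; apply/existsP; exists x'; 
  by rewrite hx hy fx fy eq_sym c.
Qed.


Lemma E_sym n hT (H : {group hT}) (f : {morphism H >-> {perm 'I_n}}) :
  symmetric (reduced_edge [set: {perm 'I_n}]%G f).
Proof.
move=> x y; rewrite /reduced_edge adj_sym.
by case: (x \in _); case: (y \in _); case: (deep_dominant _ _ x); case: (deep_dominant _ _ y).
Qed.

Lemma edge_pow n hT (H : {group hT}) (f : {morphism H >-> {perm 'I_n}}) x w :
  f @* H = [set: {perm 'I_n}] -> 2 < n ->
  x != 1 -> w != 1 -> x != w -> x \in <[w]> ->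
  reduced_edge [set: {perm 'I_n}]%G f x w.
Proof.
move=> surj n2 x1 w1 xw /cycleP[i ei].
apply/and5P; split; [exact: in_setT | exact: nondom | exact: in_setT | exact: nondom | ].
rewrite /deep_adj xw /=.
have [w' hw' fw] := preim w surj.
apply/existsP; exists (w' ^+ i); apply/existsP; exists w'.
rewrite groupX // hw' morphX // fw ei !eqxx /=.
by apply/eqP; apply: commute_sym; apply: commuteX.
Qed.

Local Notation RR f := (connect (reduced_edge [set: _]%G f)).

Lemma RR_sym n hT (H : {group hT}) (f : {morphism H >-> {perm 'I_n}}) x y :
  RR f x y -> RR f y x.
Proof. by rewrite (sym_connect_sym (E_sym f)). Qed.

Lemma RR_trans n hT (H : {group hT}) (f : {morphism H >-> {perm 'I_n}}) x y z :
  RR f x y -> RR f y z -> RR f x z.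
Proof. exact: connect_trans. Qed.

Lemma RR_pow n hT (H : {group hT}) (f : {morphism H >-> {perm 'I_n}}) x w :
  f @* H = [set: {perm 'I_n}] -> 2 < n ->
  x != 1 -> w != 1 -> x \in <[w]> -> RR f x w.
Proof.
move=> surj n2 x1 w1 xw; have [->|ne] := eqVneq x w; first exact: connect0.
by apply: connect1; apply: edge_pow.
Qed.

Lemma RR_coprime n hT (H : {group hT}) (f : {morphism H >-> {perm 'I_n}}) x y :
  f @* H = [set: {perm 'I_n}] -> 2 < n ->
  x != 1 -> y != 1 -> commute x y -> coprime #[x] #[y] -> RR f x y.
Proof.
move=> surj n2 x1 y1 cxy co.
have xy1 : x * y != 1.
  apply: contra x1 => /eqP e; have ey : y = x^-1 by rewrite -(mulKg x y) e mulg1.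
  by rewrite -order_eq1 -(gcdnn #[x]) {2}(_ : #[x] = #[y]) ?(eqP co) // ey orderV.
have hx : x \in <[x * y]>.
  by apply: (subsetP (cycleMsub cxy co)); exact: cycle_id.
have hy : y \in <[x * y]>.
  rewrite cxy; apply: (subsetP (cycleMsub (commute_sym cxy) _)); last exact: cycle_id.
  by rewrite coprime_sym.
apply: RR_trans (RR_pow surj n2 x1 xy1 hx) _.
exact: RR_sym (RR_pow surj n2 y1 xy1 hy).
Qed.

Ltac split_nin := repeat match goal with
 | H : is_true (~~ (_ \in _ :: _)) |- _ => rewrite in_cons negb_or in H; case/andP: H => ? ?
 | H : is_true (~~ (_ \in [::])) |- _ => clear H
 end.
Ltac neq := solve [assumption | rewrite eq_sym; assumption].

Lemma tperm_ne1 n (a b : 'I_n) : a != b -> tperm a b != 1.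
Proof.
move=> ab; apply/eqP => /permP/(_ a); rewrite tpermL perm1 => e.
by move: ab; rewrite e eqxx.
Qed.

Lemma tperm_ord n (a b : 'I_n) : #[tperm a b] %| 2.
Proof. by rewrite order_dvdn expgS expg1 tperm2. Qed.

Lemma c3_ord n (a b c : 'I_n) : a != b -> a != c -> b != c -> #[c3 a b c] %| 3.
Proof. by move=> ab ac bc; rewrite order_dvdn c3_cube. Qed.

Lemma co2odd m k : m %| 2 -> odd k -> coprime m k.
Proof. by move=> h ok; apply: (coprime_dvdl h); rewrite coprime2n. Qed.

Lemma odd3 k : k %| 3 -> odd k.
Proof. by move=> h; apply: (dvdn_odd h). Qed.

Lemma RR_odd_fix n hT (H : {group hT}) (f : {morphism H >-> {perm 'I_n}}) (y : {perm 'I_n}) (a b : 'I_n) :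
  f @* H = [set: {perm 'I_n}] -> 2 < n ->
  y != 1 -> odd #[y] -> a != b -> y a = a -> y b = b -> RR f y (tperm a b).
Proof.
move=> surj n2 y1 oy ab ya yb.
apply: RR_coprime => //; first exact: tperm_ne1.
  apply: commute_sym; apply: commute_of_conj; by rewrite tpermJ ya yb.
by rewrite coprime_sym; apply: co2odd => //; exact: tperm_ord.
Qed.

Lemma RR_tt n hT (H : {group hT}) (f : {morphism H >-> {perm 'I_n}}) (a b c d : 'I_n) :
  f @* H = [set: {perm 'I_n}] -> 6 < n ->
  a != b -> c != d -> RR f (tperm a b) (tperm c d).
Proof.
move=> surj n6 ab cd; have n2 : 2 < n by apply: leq_trans n6.
have [e1 h1] := @fresh_pt n [:: a; b; c; d] (leq_trans (isT : 5 <= 7) n6).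
have [e2 h2] := @fresh_pt n [:: e1; a; b; c; d] (leq_trans (isT : 6 <= 7) n6).
have [e3 h3] := @fresh_pt n [:: e2; e1; a; b; c; d] n6.
split_nin.
have e12 : e1 != e2 by neq.
have e13 : e1 != e3 by neq.
have e23 : e2 != e3 by neq.
have c1 := c3_ne1 e12 e13 e23.
have oc := odd3 (c3_ord e12 e13 e23).
apply: RR_trans (RR_sym (RR_odd_fix surj n2 c1 oc ab _ _)) _.
  by apply: c3_fix; rewrite !inE !negb_or; apply/and3P; split; neq.
  by apply: c3_fix; rewrite !inE !negb_or; apply/and3P; split; neq.
apply: RR_odd_fix => //.
  by apply: c3_fix; rewrite !inE !negb_or; apply/and3P; split; neq.
  by apply: c3_fix; rewrite !inE !negb_or; apply/and3P; split; neq.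
Qed.

Definition Pt n hT (H : {group hT}) (f : {morphism H >-> {perm 'I_n}}) (x : {perm 'I_n}) :=
  exists a b : 'I_n, a != b /\ RR f x (tperm a b).

Lemma inv_invol n (z : {perm 'I_n}) : #[z] %| 2 -> forall x, z (z x) = x.
Proof.
by rewrite order_dvdn expgS expg1 => /eqP e x; rewrite -permM e perm1.
Qed.

Lemma Pt_inv3 n hT (H : {group hT}) (f : {morphism H >-> {perm 'I_n}}) (z : {perm 'I_n}) (c d e : 'I_n) :
  f @* H = [set: {perm 'I_n}] -> 4 < n ->
  z != 1 -> #[z] %| 2 -> c != d -> c != e -> d != e -> z c = c -> z d = d -> z e = e ->
  Pt f z.
Proof.
move=> surj n4 z1 oz cd ce de zc zd ze; have n2 : 2 < n by apply: leq_trans n4.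
have cc1 := c3_ne1 cd ce de.
have occ := odd3 (c3_ord cd ce de).
have [u hu] := @fresh_pt n [:: c; d; e] (leq_trans (isT : 4 <= 5) n4).
have [v hv] := @fresh_pt n [:: u; c; d; e] n4.
split_nin.
have uv : u != v by neq.
exists u, v; split => //.
apply: RR_trans (RR_odd_fix surj n2 cc1 occ uv _ _).
  apply: RR_coprime => //; last exact: co2odd.
  by apply: commute_sym; apply: commute_of_conj; rewrite c3_conj zc zd ze.
by apply: c3_fix; rewrite !inE !negb_or; apply/and3P; split; neq.
by apply: c3_fix; rewrite !inE !negb_or; apply/and3P; split; neq.
Qed.

Lemma Pt_inv6 n hT (H : {group hT}) (f : {morphism H >-> {perm 'I_n}}) (z : {perm 'I_n}) (a1 a2 a3 : 'I_n) :
  f @* H = [set: {perm 'I_n}] -> 7 < n ->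
  z != 1 -> #[z] %| 2 -> uniq [:: a1; a2; a3; z a1; z a2; z a3] -> Pt f z.
Proof.
move=> surj n7 z1 oz hu; have n2 : 2 < n by apply: leq_trans n7.
have zz := inv_invol oz.
case/andP: hu => h1 /andP[h2 /andP[h3 /andP[h4 /andP[h5 _]]]].
split_nin.
have e12 : a1 != a2 by neq.
have e13 : a1 != a3 by neq.
have e23 : a2 != a3 by neq.
have f12 : z a1 != z a2 by neq.
have f13 : z a1 != z a3 by neq.
have f23 : z a2 != z a3 by neq.
set c := c3 a1 a2 a3.
set cz := c3 (z a1) (z a2) (z a3).
have czE : c ^ z = cz by rewrite c3_conj.
have czc : commute cz c.
  apply: commute_of_conj; rewrite /cz c3_conj !c3_fix //;
  by rewrite !inE !negb_or; apply/and3P; split; neq.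
set s := c * cz.
have s3 : s ^+ 3 = 1.
  rewrite /s expgMn; last exact: commute_sym. 
  by rewrite /c /cz !c3_cube // mulg1.
have os : odd #[s] by apply: odd3; rewrite order_dvdn s3.
have s1 : s != 1.
  apply/eqP => /permP/(_ a1); rewrite perm1 /s permM /c c3_a // /cz c3_fix => [e|].
    by move: e12; rewrite e eqxx.
  by rewrite !inE !negb_or; apply/and3P; split; neq.
have zzz : z * z = 1 by apply/permP => x; rewrite permM zz perm1.
have czs : commute s z.
  apply: commute_of_conj; rewrite /s conjMg czE -czE -conjgM zzz conjg1.
  by rewrite czE; apply: czc.
have [u hu] := @fresh_pt n [:: a1; a2; a3; z a1; z a2; z a3] (leq_trans (isT : 7 <= 8) n7).
have [v hv] := @fresh_pt n [:: u; a1; a2; a3; z a1; z a2; z a3] n7.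
split_nin.
have uv : u != v by neq.
exists u, v; split => //.
apply: RR_trans (RR_odd_fix surj n2 s1 os uv _ _).
  apply: RR_sym; apply: RR_coprime => //; last by rewrite coprime_sym; apply: co2odd.
by rewrite /s permM !c3_fix //; rewrite !inE !negb_or; apply/and3P; split; neq.
by rewrite /s permM !c3_fix //; rewrite !inE !negb_or; apply/and3P; split; neq.
Qed.

Lemma Pt_inv n hT (H : {group hT}) (f : {morphism H >-> {perm 'I_n}}) (z : {perm 'I_n}) :
  f @* H = [set: {perm 'I_n}] -> 8 < n ->
  z != 1 -> #[z] %| 2 -> Pt f z.
Proof.
move=> surj n8 z1 oz; have n7 : 7 < n by apply: ltnW.
have n4 : 4 < n by apply: leq_trans n8.
have zz := inv_invol oz.
have [h3|no3] := boolP
  [exists c, exists d, exists e, [&& c != d, c != e, d != e, z c == c, z d == d & z e == e]].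
  case/existsP: h3 => c /existsP[d /existsP[e /and5P[cd ce de /eqP zc /andP[/eqP zd /eqP ze]]]].
  exact: Pt_inv3 surj n4 z1 oz cd ce de zc zd ze.
have fm : forall s : seq 'I_n, size s + 3 <= n -> exists2 e, e \notin s & z e != e.
  move=> s hs.
  have [e1 h1] := @fresh_pt n s ltac:(lia).
  have [m1|f1] := boolP (z e1 != e1); first by exists e1.
  have [e2 h2] := @fresh_pt n (e1 :: s) ltac:(rewrite /=; lia).
  have [m2|f2] := boolP (z e2 != e2); first by exists e2; move: h2; rewrite inE negb_or => /andP[].
  have [e3 h3] := @fresh_pt n (e2 :: e1 :: s) ltac:(rewrite /=; lia).
  have [m3|f3] := boolP (z e3 != e3); first by exists e3; move: h3; rewrite !inE !negb_or => /and3P[].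
  move: no3; rewrite negb_exists => /forallP/(_ e1); rewrite negb_exists => /forallP/(_ e2).
  rewrite negb_exists => /forallP/(_ e3).
  rewrite negbK in f1; rewrite negbK in f2; rewrite negbK in f3.
  rewrite f1 f2 f3; move: h2 h3; rewrite !inE !negb_or => /andP[h21 _] /and3P[h32 h31 _].
  by rewrite eq_sym h21 eq_sym h31 eq_sym h32.
have [a1 _ m1] := fm [::] ltac:(rewrite /=; lia).
have [a2 h2 m2] := fm [:: a1; z a1] ltac:(rewrite /=; lia).
have [a3 h3 m3] := fm [:: a1; z a1; a2; z a2] ltac:(rewrite /=; lia).
split_nin.
have zinj : injective z by exact: perm_inj.
apply: (Pt_inv6 surj n7 z1 oz (a1 := a1) (a2 := a2) (a3 := a3)).
have nz : forall x y, x != z y -> z x != y.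
  by move=> x y; apply: contra => /eqP <-; rewrite zz.
rewrite /= !inE !negb_or; repeat (apply/andP; split) => //; 
  try neq; try (apply: nz; neq); try (rewrite eq_sym; apply: nz; neq);
  try (rewrite (inj_eq zinj); neq).
Qed.

Lemma Pt_odd n hT (H : {group hT}) (f : {morphism H >-> {perm 'I_n}}) (y : {perm 'I_n}) :
  f @* H = [set: {perm 'I_n}] -> 8 < n -> ~~ prime n -> ~~ prime n.-1 ->
  y != 1 -> prime #[y] -> odd #[y] -> Pt f y.
Proof.
move=> surj n8 np np1 y1 hp oy; have n2 : 2 < n by apply: leq_trans n8.
have [h2|no2] := boolP [exists a, exists b, [&& a != b, y a == a & y b == b]].
  case/existsP: h2 => a /existsP[b /and3P[ab /eqP ya /eqP yb]].
  by exists a, b; split => //; apply: RR_odd_fix.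
have [a va] := moved y1.
have [hO _] := porbit_card hp va.
have [b /andP[vb ba]] : exists b, (y b != b) && (b \notin porbit y a).
  apply/existsP; apply: contraT; rewrite negb_exists => /forallP hall.
  have hC : #|~: porbit y a| <= 1.
    apply/card_le1_eqP => u v; rewrite !inE => hu hv.
    have fu : y u == u by move: (hall u); rewrite hu andbT negbK.
    have fv : y v == v by move: (hall v); rewrite hv andbT negbK.
    apply/eqP; apply: contraT => uv; case/negP: no2.
    by apply/existsP; exists v; apply/existsP; exists u; rewrite uv fu fv.
  have := cardsC (porbit y a); rewrite card_ord hO => hc.
  have : n = #[y] \/ n.-1 = #[y] by lia.
  by case=> e; [move: np | move: np1]; rewrite e hp.
have [z [z1 oz cyz]] := swap_perm hp va vb ba.
have [c [d [cd hz]]] := Pt_inv surj n8 z1 oz.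
exists c, d; split => //; apply: RR_trans hz.
apply: RR_coprime => //; rewrite coprime_sym; exact: co2odd.
Qed.

Lemma Pt_all n hT (H : {group hT}) (f : {morphism H >-> {perm 'I_n}}) (x : {perm 'I_n}) :
  f @* H = [set: {perm 'I_n}] -> 8 < n -> ~~ prime n -> ~~ prime n.-1 ->
  x != 1 -> Pt f x.
Proof.
move=> surj n8 np np1 x1; have n2 : 2 < n by apply: leq_trans n8.
have ox : 1 < #[x] by rewrite order_gt1.
set p := pdiv #[x].
have hp : prime p := pdiv_prime ox.
have hd : p %| #[x] := pdiv_dvd _.
set y := x ^+ (#[x] %/ p).
have oy : #[y] = p.
  rewrite /y orderXdiv ?dvdn_div // divnA // mulKn //; exact: ltnW.
have y1 : y != 1 by rewrite -order_gt1 oy prime_gt1.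
have ryx : RR f y x by apply: RR_pow => //; exact: mem_cycle.
suff [a [b [ab h]]] : Pt f y by exists a, b; split => //; apply: RR_trans (RR_sym ryx) h.
case: (even_prime hp) => e.
  by apply: Pt_inv => //; rewrite oy e.
by apply: Pt_odd => //; rewrite oy.
Qed.

Local Close Scope group_scope.

Theorem theorem5p25 (n : nat) (hn : 6 <= n)
    (hT : finGroupType) (H : {group hT})
    (f : {morphism H >-> {perm 'I_n}}) :
  schur_cover [set: {perm 'I_n}]%G f ->
  (reduced_deep_connected [set: {perm 'I_n}]%G f <->
   (~~ prime n /\ ~~ prime n.-1)).
Proof.
case=> [[surj _] _]; have n2 : 2 < n by apply: leq_trans hn.
have nd1 : forall v, ~~ deep_dominant [set: {perm 'I_n}]%G f v -> v != 1%g.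
  by move=> v; apply: contra => /eqP ->; exact: dom1.
split.
- move=> conn.
  have key : forall p, prime p -> n <= p + 1 -> p <= n -> False.
    move=> p hp hpn hpn'.
    have p5 : 4 < p by lia.
    have hcard : forall q, 0 < q <= n -> q %| #|[set: {perm 'I_n}]|.
      by move=> q hq; rewrite cardsT card_Sn dvdn_fact.
    have [y _ oy] := Cauchy hp (hcard p ltac:(have := prime_gt1 hp; lia)).
    have [u _ ou] := Cauchy (isT : prime 2) (hcard 2 ltac:(lia)).
    have y1 : y != 1%g by rewrite -order_gt1 oy prime_gt1.
    have u1 : u != 1%g by rewrite -order_gt1 ou.
    have c := conn y u (in_setT _) (nondom f n2 y1) (in_setT _) (nondom f n2 u1).
    have cl : closed (reduced_edge [set: {perm 'I_n}]%G f) [pred v : {perm 'I_n} | (v ^+ p == 1)%g].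
      apply: (intro_closed (sym_connect_sym (E_sym f))) => v w.
      case/and5P=> _ hv _ _ adj; rewrite !inE => vp.
      have v1 := nd1 v hv.
      have n1 : #[v]%g != 1 by rewrite order_eq1.
      have ov : #[v]%g = p by apply: (elimT (prime_nt_dvdP hp n1)); rewrite order_dvdn.
      have := @cent_prime n v w; rewrite ov => /(_ hp hpn (adj_comm adj)) /cycleP[i ->].
      by rewrite -expgM mulnC expgM (eqP vp) expg1n.
    have := closed_connect cl c; rewrite !inE -oy expg_order eqxx => /esym.
    rewrite -order_dvdn ou oy (dvdn_prime2 (isT : prime 2) hp) => /eqP e; move: p5; rewrite -e.
    done.
  split; apply/negP => hp.
    by apply: (key n hp); lia.
  by apply: (key n.-1 hp); lia.
- case=> np np1 x y _ hx _ hy.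
  have n8 : 8 < n.
    apply: contraT; rewrite -leqNgt => h.
    have : n \in [:: 6; 7; 8] by rewrite !inE; lia.
    by rewrite !inE => /or3P[] /eqP e; move: np np1; rewrite e.
  have [a [b [ab ha]]] := Pt_all surj n8 np np1 (nd1 x hx).
  have [c [d [cd hc]]] := Pt_all surj n8 np np1 (nd1 y hy).
  apply: RR_trans ha _; apply: RR_trans (RR_sym hc).
  by apply: RR_tt => //; lia.
Qed.
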